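(* Let $(X,d)$ be an $F$-space with non-decreasing metric $d$ and let $\mathcal{E}(x)=\{e_n(x)\}_{n=0}^\infty$ be a scale on $X$. Then $X_{\mathcal{E}}:=\{x\in X:\mathcal{E}(x)\in c_0\}$ is a closed vector subspace of $X$.
   Context: An $F$-space is a complete metric vector space with translation-invariant metric $d$; $d$ is non-decreasing if $d(\alpha x,0)\le d(x,0)$ for $0\le\alpha\le1$. Write $\|x\|=d(x,0)$. A map $\mathcal{E}:X\to\ell^\infty$, $\mathcal{E}(x)=\{e_n(x)\}_{n=0}^\infty$ with each $e_n:X\to[0,\infty)$, is a scale on $X$ if: (i) there is $C_1>0$ with $C_1\|x\|\ge e_n(x)\ge e_{n+1}(x)$ for all $x\in X$, $n\in\mathbb{N}$, and each $e_n$ is continuous; (ii) there exist a strictly increasing $K:\mathbb{N}\to\mathbb{N}$ and $C_2>0$ with $e_{K(n)}(x+y)\le C_2(e_n(x)+e_n(y))$ for all $x,y\in X$, $n\in\mathbb{N}$; (iii) there is a function $\phi:[0,\infty)\to[0,\infty)$ with $e_n(\lambda x)\le\phi(|\lambda|)e_n(x)$ for all scalars $\lambda$ and $x\in X$, and $e_n(-x)=e_n(x)$ for all $x$. $c_0$ denotes the space of sequences converging to $0$. *)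

(* Defs.v *)
From mathcomp Require Import all_boot all_order all_algebra.
From mathcomp Require Import reals.
Set Implicit Arguments. Unset Strict Implicit. Unset Printing Implicit Defensive.
Import Order.TTheory GRing.Theory Num.Theory.
Local Open Scope ring_scope.

Section FSpace.
Variables (R : realType) (V : lmodType R).

Definition is_metric (d : V -> V -> R) : Prop :=
  [/\ forall x y, 0 <= d x y,
      forall x y, d x y = 0 <-> x = y,
      forall x y, d x y = d y x &
      forall x y z, d x z <= d x y + d y z].

Definition d_cvg (d : V -> V -> R) (u : nat -> V) (l : V) : Prop :=
  forall eps : R, 0 < eps -> exists N : nat, forall n : nat, (N <= n)%N -> d (u n) l < eps.

Definition r_cvg (u : nat -> R) (l : R) : Prop :=
  forall eps : R, 0 < eps -> exists N : nat, forall n : nat, (N <= n)%N -> `|u n - l| < eps.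

Definition d_cauchy (d : V -> V -> R) (u : nat -> V) : Prop :=
  forall eps : R, 0 < eps -> exists N : nat,
    forall m n : nat, (N <= m)%N -> (N <= n)%N -> d (u m) (u n) < eps.

Definition is_Fspace (d : V -> V -> R) : Prop :=
  [/\ is_metric d,
      (forall x y z, d (x + z) (y + z) = d x y),
      (forall u, d_cauchy d u -> exists l, d_cvg d u l),
      (forall (u v : nat -> V) x y, d_cvg d u x -> d_cvg d v y ->
          d_cvg d (fun n => u n + v n) (x + y)) &
      (forall (a : nat -> R) (u : nat -> V) al x, r_cvg a al -> d_cvg d u x ->
          d_cvg d (fun n => a n *: u n) (al *: x))].

Definition nondecreasing_metric (d : V -> V -> R) : Prop :=
  forall (x : V) (a : R), 0 <= a -> a <= 1 -> d (a *: x) 0 <= d x 0.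

Definition d_continuous (d : V -> V -> R) (f : V -> R) : Prop :=
  forall x (eps : R), 0 < eps -> exists2 delta : R, 0 < delta &
    forall y, d y x < delta -> `|f y - f x| < eps.

(* scale E(x) = (e n x)_n on (V,d), with ||x|| = d x 0 *)
Definition is_scale (d : V -> V -> R) (e : nat -> V -> R) : Prop :=
  [/\ (forall n x, 0 <= e n x),
      (exists2 C1 : R, 0 < C1 &
         forall x n, e n x <= C1 * d x 0 /\ e n.+1 x <= e n x),
      (forall n, d_continuous d (e n)),
      (exists K : nat -> nat, exists2 C2 : R,
         (forall m n, (m < n)%N -> (K m < K n)%N) /\ 0 < C2 &
         forall x y n, e (K n) (x + y) <= C2 * (e n x + e n y)) &
      (exists phi : R -> R,
         (forall t, 0 <= t -> 0 <= phi t) /\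
         (forall (lam : R) x n, e n (lam *: x) <= phi `|lam| * e n x) /\
         (forall x n, e n (- x) = e n x))].

Definition X_E (e : nat -> V -> R) : V -> Prop :=
  fun x => r_cvg (fun n => e n x) 0.

Definition closed_subspace (d : V -> V -> R) (S : V -> Prop) : Prop :=
  [/\ S 0,
      (forall x y, S x -> S y -> S (x + y)),
      (forall (lam : R) x, S x -> S (lam *: x)) &
      (forall x, (forall eps : R, 0 < eps -> exists2 y, S y & d x y < eps) -> S x)].

End FSpace.

(* Main.v *)
Require Import Defs.
From mathcomp Require Import all_boot all_order all_algebra.
From mathcomp Require Import reals.
From mathcomp Require Import ring lra.
Import Order.TTheory GRing.Theory Num.Theory.
Local Open Scope ring_scope.

Lemma mono_e (R : realType) (V : lmodType R) (e : nat -> V -> R) x :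
  (forall n, e n.+1 x <= e n x) -> forall k m, (k <= m)%N -> e m x <= e k x.
Proof.
move=> H k; elim=> [|m IH]; first by rewrite leqn0 => /eqP ->.
rewrite leq_eqVlt => /orP [/eqP -> //|]; rewrite ltnS => /IH.
by apply: le_trans.
Qed.

Lemma cvg0_ev (R : realType) (V : lmodType R) (e : nat -> V -> R) x :
  (forall n, 0 <= e n x) -> (forall n, e n.+1 x <= e n x) ->
  (forall eps : R, 0 < eps -> exists N, e N x < eps) -> X_E e x.
Proof.
move=> H0 Hm H eps he; have [N HN] := H eps he; exists N => n Hn.
rewrite subr0 ger0_norm //; apply: le_lt_trans HN; exact: mono_e.
Qed.

Theorem mainTheorem6 (R : realType) (V : lmodType R) (d : V -> V -> R)
    (e : nat -> V -> R) :
  is_Fspace d -> nondecreasing_metric d -> is_scale d e ->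
  closed_subspace d (X_E e).
Proof.
move=> [[d0 dE dS dT] dI _ _ _] _ [e0 [C1 C1p HC1] _ [K [C2 [_ C2p] HK]] [phi [phi0 [Hphi _]]]].
have mon x n : e n.+1 x <= e n x by case: (HC1 x n).
have ev x : X_E e x -> forall eps, 0 < eps -> exists N, e N x < eps.
  move=> Hx eps he; have [N HN] := Hx eps he; exists N.
  by have := HN N (leqnn N); rewrite subr0 ger0_norm.
split.
- apply: cvg0_ev => // eps he; exists 0%N.
  have [H _] := HC1 0 0%N; have : d 0 0 = 0 by apply/dE.
  move=> E; rewrite E mulr0 in H; exact: le_lt_trans H he.
- move=> x y Hx Hy; apply: cvg0_ev => // eps he.
  have he' : 0 < eps / (2 * C2) by apply: divr_gt0 => //; lra.
  have [N1 H1] := ev x Hx _ he'; have [N2 H2] := ev y Hy _ he'.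
  exists (K (maxn N1 N2)).
  apply: le_lt_trans (HK x y _) _.
  have a1 : e (maxn N1 N2) x <= e N1 x by exact: (@mono_e _ _ e x (mon x) _ _ (leq_maxl _ _)).
  have a2 : e (maxn N1 N2) y <= e N2 y by exact: (@mono_e _ _ e y (mon y) _ _ (leq_maxr _ _)).
  have E : eps = C2 * (eps / (2 * C2) + eps / (2 * C2)).
    by field; lra.
  rewrite [X in _ < X]E ltr_pM2l //; lra.
- move=> lam x Hx; apply: cvg0_ev => // eps he.
  have hp := phi0 `|lam| (normr_ge0 lam).
  have he' : 0 < eps / (phi `|lam| + 1) by apply: divr_gt0 => //; lra.
  have [N HN] := ev x Hx _ he'; exists N.
  apply: le_lt_trans (Hphi lam x N) _.
  have E : eps = (phi `|lam| + 1) * (eps / (phi `|lam| + 1)) by field; lra.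
  have := e0 N x => ?.
  apply: (@le_lt_trans _ _ ((phi `|lam| + 1) * e N x)).
    by rewrite mulrDl mul1r lerDl.
  by rewrite [X in _ < X]E ltr_pM2l //; lra.
- move=> x Hx; apply: cvg0_ev => // eps he.
  have he' : 0 < eps / (2 * C1 * C2) by apply: divr_gt0 => //; rewrite !mulr_gt0.
  have [y Hy Hxy] := Hx _ he'.
  have he2 : 0 < eps / (2 * C2) by apply: divr_gt0 => //; lra.
  have [N HN] := ev y Hy _ he2.
  exists (K N).
  have -> : x = (x - y) + y by rewrite subrK.
  apply: le_lt_trans (HK _ _ _) _.
  have [h1 _] := HC1 (x - y) N.
  have dxy : d (x - y) 0 = d x y by rewrite -(dI x y (- y)) subrr.
  rewrite dxy in h1.
  have h2 : C1 * d x y <= C1 * (eps / (2 * C1 * C2)).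
    by rewrite ler_pM2l //; apply: ltW.
  have E1 : C1 * (eps / (2 * C1 * C2)) = eps / (2 * C2) by field; lra.
  have E : eps = C2 * (eps / (2 * C2) + eps / (2 * C2)) by field; lra.
  rewrite [X in _ < X]E ltr_pM2l //; lra.
Qed.
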